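(* Assume $\mathfrak h=\mathfrak s$, and let $X=\prod_{j\in J}X_j$ be a product of topological spaces. Then the following are equivalent: (1) $X$ is sequentially compact; (2) every $X_j$ is sequentially compact, and the set of $j\in J$ such that $X_j$ contains a sequence which does not converge has cardinality $<\mathfrak s$; (3) every $X_j$ is sequentially compact, and the set of $j\in J$ such that $X_j$ is not ultraconnected has cardinality $<\mathfrak s$.
   Context: No separation axioms are assumed; all topological spaces are nonempty. A space is sequentially compact if every sequence $(x_n)_{n\in\omega}$ has a convergent subsequence. A space is ultraconnected if no two nonempty closed subsets of it are disjoint. The splitting number $\mathfrak s$ is the least cardinality of a family $\mathcal S\subseteq[\omega]^\omega$ such that for every $A\in[\omega]^\omega$ there is $S\in\mathcal S$ with both $A\cap S$ and $A\setminus S$ infinite. The cardinal $\mathfrak h$ is the smallest cardinal such that there exist $\mathfrak h$ sequentially compact spaces whose product is not sequentially compact. *)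

(* Defs.v *)
From HB Require Import structures.
From mathcomp Require Import all_boot all_order all_algebra.
From mathcomp Require Import all_classical all_reals all_analysis.
Set Implicit Arguments. Unset Strict Implicit. Unset Printing Implicit Defensive.
Local Open Scope classical_set_scope.
Local Open Scope card_scope.

Definition seq_compact (T : topologicalType) : Prop :=
  forall x : nat -> T, exists phi : nat -> nat,
    (forall n m, (n < m)%N -> (phi n < phi m)%N) /\
    exists l : T, (x \o phi) @ \oo --> l.

Definition ultraconnected (T : topologicalType) : Prop :=
  forall A B : set T, closed A -> closed B -> A !=set0 -> B !=set0 ->
    A `&` B !=set0.

Definition has_nonconv_seq (T : topologicalType) : Prop :=
  exists x : nat -> T, ~ (exists l : T, x @ \oo --> l).

Definition splits (S A : set nat) : Prop :=
  infinite_set (A `&` S) /\ infinite_set (A `\` S).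

Definition splitting_family (F : set (set nat)) : Prop :=
  (forall S, F S -> infinite_set S) /\
  (forall A : set nat, infinite_set A -> exists2 S, F S & splits S A).

(* |A| < s : no splitting family has cardinality <= |A|
   (s is the least cardinality of a splitting family). *)
Definition card_lt_s (T : Type) (A : set T) : Prop :=
  forall F : set (set nat), splitting_family F -> ~ (F #<= A).

(* |A| < h : every product of at most |A| many sequentially compact
   spaces is sequentially compact (h is the least cardinality of a family
   of sequentially compact spaces with non-sequentially-compact product). *)
Definition card_lt_h (T : Type) (A : set T) : Prop :=
  forall (K : Type) (Y : K -> topologicalType),
    [set: K] #<= A ->
    (forall k, inhabited (Y k)) ->
    (forall k, seq_compact (Y k)) ->
    seq_compact (prod_topology Y).

(* h = s, expressed as: for every cardinal kappa (= |A|), kappa < h <-> kappa < s. *)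
Definition h_eq_s : Prop :=
  forall (T : Type) (A : set T), card_lt_h A <-> card_lt_s A.

(* Main.v *)
Require Import Defs.
From HB Require Import structures.
From mathcomp Require Import all_boot all_order all_algebra.
From mathcomp Require Import all_classical all_reals all_analysis.
Local Open Scope classical_set_scope.
Local Open Scope card_scope.
Set Implicit Arguments.


Lemma prod_cvg_pt (J : Type) (X : J -> topologicalType) (x : nat -> prod_topology X)
  (l : prod_topology X) :
  (forall i, (fun n => x n i) @ \oo --> l i) -> x @ \oo --> l.
Proof.
move=> H; apply/cvg_sup => i U [V] [[W] oW <-] WfN WU.
apply: (filterS WU); have := H i W; rewrite nbhs_simpl; apply.
by apply: open_nbhs_nbhs.
Qed.

Lemma prod_cvg_proj (J : Type) (X : J -> topologicalType) (x : nat -> prod_topology X)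
  (l : prod_topology X) i :
  x @ \oo --> l -> (fun n => x n i) @ \oo --> l i.
Proof.
move=> /cvg_sup /(_ i) H W /=.
rewrite nbhsE => -[B [oB Bl] BW]; apply: (filterS BW).
have := H (fun f : prod_topology X => B (f i)).
rewrite nbhs_simpl; apply.
exists (fun f : prod_topology X => B (f i)); split => //; exists B => //.
Qed.

Lemma phi_ge (phi : nat -> nat) :
  (forall n m, (n < m)%N -> (phi n < phi m)%N) -> forall n, (n <= phi n)%N.
Proof.
move=> inc; elim=> [//|n IH]; exact: leq_ltn_trans IH (inc _ _ (ltnSn n)).
Qed.

Lemma ultra_conv (T : topologicalType) : seq_compact T -> ultraconnected T ->
  forall x : nat -> T, exists l : T, x @ \oo --> l.
Proof.
move=> sc uc x.
have D : forall n, exists z, forall k, (k <= n)%N -> closure [set x k] z.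
  elim=> [|n [z Hz]].
    exists (x 0%N) => k; rewrite leqn0 => /eqP ->; exact: subset_closure.
  pose A := \bigcap_(k in [set k | (k <= n)%N]) closure [set x k].
  have cA : closed A by apply: closed_bigI => k _; exact: closed_closure.
  have [w [Aw Bw]] := uc A (closure [set x n.+1]) cA (@closed_closure _ [set x n.+1])
     (ex_intro _ z (fun k kn => Hz k kn)) (ex_intro _ (x n.+1) (subset_closure (erefl _))).
  exists w => k; rewrite leq_eqVlt => /orP [/eqP -> //| ]; rewrite ltnS => kn.
  exact: Aw.
have [d Hd] := choice D.
have [phi [inc [z Hz]]] := sc d.
have Cz : forall m, closure [set x m] z.
  move=> m; apply: (closed_cvg _ (@closed_closure _ [set x m]) _ _ Hz).
  exists m => // n /= mn; apply: Hd; exact: leq_trans mn (@phi_ge phi inc n).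
exists z => U /= Uz; exists 0%N => // n _.
by have [w [/= -> Uw]] := Cz n U Uz.
Qed.

Lemma nonultra (T : topologicalType) : ~ ultraconnected T ->
  exists a b (A B : set T), [/\ closed A, closed B, A a, B b &
     forall w, A w -> B w -> False].
Proof.
move=> nu; apply: contrapT => H; apply: nu => A B cA cB [a Aa] [b Bb].
apply: contrapT => nAB; apply: H; exists a, b, A, B; split => // w Aw Bw.
by apply: nAB; exists w.
Qed.

Lemma freq_nonconv (T : topologicalType) (A B : set T) (y : nat -> T) (l : T) :
  closed A -> closed B -> (forall w, A w -> B w -> False) ->
  (forall M, exists k, (M <= k)%N /\ A (y k)) ->
  (forall M, exists k, (M <= k)%N /\ B (y k)) ->
  ~ (y @ \oo --> l).
Proof.
move=> cA cB dAB fA fB Hl.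
have [Al|nAl] := pselect (A l).
  have nb : nbhs l (~` B).
    apply: open_nbhs_nbhs; split; first exact: closed_openC.
    by move=> Bl; exact: dAB Al Bl.
  have [N _ HN] := Hl _ nb.
  have [k [Nk Bk]] := fB N; exact: (HN k Nk Bk).
have nb : nbhs l (~` A).
  by apply: open_nbhs_nbhs; split; first exact: closed_openC.
have [N _ HN] := Hl _ nb.
have [k [Nk Ak]] := fA N; exact: (HN k Nk Ak).
Qed.

Lemma nonultra_nonconv (T : topologicalType) : ~ ultraconnected T -> has_nonconv_seq T.
Proof.
move=> /nonultra [a [b [A [B [cA cB Aa Bb dAB]]]]].
exists (fun n => if odd n then a else b) => -[l Hl].
apply: (@freq_nonconv _ A B _ l cA cB dAB _ _ Hl) => M.
  exists (M + M).+1; split; first by apply: leqW; rewrite leq_addr.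
  by rewrite /= addnn odd_double.
exists (M + M); split; first by rewrite leq_addr.
by rewrite addnn odd_double.
Qed.

Lemma nonconv_iff (T : topologicalType) : seq_compact T ->
  (has_nonconv_seq T <-> ~ ultraconnected T).
Proof.
move=> sc; split; last exact: nonultra_nonconv.
move=> [x nx] uc; apply: nx; exact: ultra_conv.
Qed.

Lemma phi_inj (phi : nat -> nat) :
  (forall n m, (n < m)%N -> (phi n < phi m)%N) -> injective phi.
Proof.
move=> inc m n e; have [mn|nm|//] := ltngtP m n.
- by have := inc _ _ mn; rewrite e ltnn.
- by have := inc _ _ nm; rewrite e ltnn.
Qed.

Lemma range_infinite (phi : nat -> nat) :
  (forall n m, (n < m)%N -> (phi n < phi m)%N) -> infinite_set (range phi).
Proof.
move=> inc; apply/infiniteP; apply/pcard_leP; apply/injfunPex; exists phi.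
  by move=> n _; exists n.
by move=> m n _ _; exact: phi_inj.
Qed.

Lemma freq_of_inf (phi : nat -> nat) (P : set nat) :
  infinite_set (range phi `&` P) -> forall M, exists k, (M <= k)%N /\ P (phi k).
Proof.
move=> inf M; apply: contrapT => nex; apply: inf.
apply: (@sub_finite_set _ _ (phi @` `I_M)); last exact/finite_image/finite_II.
move=> w [[k _ <-] Pk]; exists k => //=.
rewrite ltnNge; apply/negP => Mk; apply: nex; by exists k.
Qed.

Lemma sc_coord (J : Type) (X : J -> topologicalType)
  (Xne : forall j, inhabited (X j)) :
  seq_compact (prod_topology X) -> forall j, seq_compact (X j).
Proof.
move=> sc j y.
have ex : forall i, exists z : X i, True by move=> i; case: (Xne i) => z; exists z.
pose d i := proj1_sig (cid (ex i)).
pose x : nat -> prod_topology X := fun n i =>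
  match pselect (j = i) with left e => eq_rect j X (y n) i e | right _ => d i end.
have xj : forall n, x n j = y n.
  move=> n; rewrite /x; case: (pselect (j = j)) => [e|//].
  by rewrite (Prop_irrelevance e erefl).
have [phi [inc [l Hl]]] := sc x.
exists phi; split => //; exists (l j).
have := prod_cvg_proj j Hl.
by have -> : (fun n => (x \o phi) n j) = y \o phi by apply: funext => n /=; rewrite xj.
Qed.

Lemma sc_lt_s (J : Type) (X : J -> topologicalType)
  (Xne : forall j, inhabited (X j)) :
  seq_compact (prod_topology X) -> card_lt_s [set j | ~ ultraconnected (X j)].
Proof.
move=> sc F [Finf Fspl] /pcard_surjP [g gsurj].
have ex : forall i, exists ab : X i * X i, ~ ultraconnected (X i) ->
   exists (A B : set (X i)), [/\ closed A, closed B, A ab.1, B ab.2 &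
     forall w, A w -> B w -> False].
  move=> i; have [u|nu] := pselect (ultraconnected (X i)).
    by case: (Xne i) => z; exists (z, z).
  have [a [b [A [B H]]]] := nonultra nu; by exists (a, b) => _; exists A, B.
pose ab i := proj1_sig (cid (ex i)).
have Hab : forall i, ~ ultraconnected (X i) -> _ := fun i => proj2_sig (cid (ex i)).
pose x : nat -> prod_topology X := fun n i =>
  if pselect (g i n) then (ab i).1 else (ab i).2.
have [phi [inc [l Hl]]] := sc x.
have [S FS [infS infnS]] := Fspl _ (@range_infinite phi inc).
have [i Ni gi] := gsurj S FS.
have [A [B [cA cB Aa Bb dAB]]] := Hab i Ni.
apply: (@freq_nonconv _ A B _ (l i) cA cB dAB _ _ (prod_cvg_proj i Hl)) => M.
  have [k [Mk Sk]] := @freq_of_inf phi _ infS M; exists k; split => //=.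
  by rewrite /x gi; case: pselect.
rewrite setDE in infnS.
have [k [Mk Sk]] := @freq_of_inf phi _ infnS M; exists k; split => //=.
by rewrite /x gi; case: pselect.
Qed.

Lemma lt_h_sc (J : Type) (X : J -> topologicalType)
  (Xne : forall j, inhabited (X j)) :
  (forall j, seq_compact (X j)) -> card_lt_h [set j | ~ ultraconnected (X j)] ->
  seq_compact (prod_topology X).
Proof.
move=> P ch x.
set N := [set j | ~ ultraconnected (X j)].
have leKN : [set: set_type N] #<= N by have /card_eqPle [] := card_setT N.
have := ch (set_type N) (fun k => X (val k)) leKN (fun k => Xne (val k))
  (fun k => P (val k)).
move=> /(_ (fun n k => x n (val k))) [phi [inc [lK HK]]].
have ex : forall j, exists c : X j, ~ N j ->
    (fun n => x (phi n) j) @ \oo --> c.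
  move=> j; have [Nj|nNj] := pselect (N j).
    by case: (Xne j) => z; exists z.
  have uc : ultraconnected (X j) by apply: contrapT.
  have [c Hc] := ultra_conv (P j) uc (fun n => x (phi n) j).
  by exists c.
pose c j := proj1_sig (cid (ex j)).
have Hc : forall j, ~ N j -> _ := fun j => proj2_sig (cid (ex j)).
pose l : prod_topology X := fun j =>
  match pselect (N j) with left h => lK (exist _ j (mem_set h)) | right _ => c j end.
exists phi; split => //; exists l; apply: prod_cvg_pt => j.
rewrite /l; case: pselect => h; last exact: Hc.
exact: (prod_cvg_proj (exist _ j (mem_set h)) HK).
Qed.

Unset Implicit Arguments.

Theorem corollary4p3 (Hhs : h_eq_s) (J : Type) (X : J -> topologicalType)
  (Xne : forall j, inhabited (X j)) :
  [/\ (seq_compact (prod_topology X) <->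
         ((forall j, seq_compact (X j)) /\
          card_lt_s [set j | has_nonconv_seq (X j)])),
      (seq_compact (prod_topology X) <->
         ((forall j, seq_compact (X j)) /\
          card_lt_s [set j | ~ ultraconnected (X j)])) &
      (((forall j, seq_compact (X j)) /\
          card_lt_s [set j | has_nonconv_seq (X j)]) <->
       ((forall j, seq_compact (X j)) /\
          card_lt_s [set j | ~ ultraconnected (X j)]))].
Proof.
have E : (forall j, seq_compact (X j)) ->
    [set j | has_nonconv_seq (X j)] = [set j | ~ ultraconnected (X j)].
  move=> P; apply: funext => j; apply: propext; exact: nonconv_iff.
have M : seq_compact (prod_topology X) <->
    ((forall j, seq_compact (X j)) /\ card_lt_s [set j | ~ ultraconnected (X j)]).
  split.
    move=> sc; split; [exact: sc_coord | exact: sc_lt_s].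
  move=> [P cs]; apply: lt_h_sc => //; exact/(Hhs _ _).2.
have I : ((forall j, seq_compact (X j)) /\
          card_lt_s [set j | has_nonconv_seq (X j)]) <->
       ((forall j, seq_compact (X j)) /\
          card_lt_s [set j | ~ ultraconnected (X j)]).
  by split=> -[P cs]; split=> //; [rewrite -(E P) | rewrite (E P)].
split => //; exact: iff_trans M (iff_sym I).
Qed.
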